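(* Let $K\subseteq\mathbb{C}$ be a field containing all roots of unity. Suppose $\{a_1,\dots,a_r\}\subseteq K^{\times}$ is simple in $K$, and $b_1,\dots,b_r$ are elements of an extension field of $K$ such that the multiplicative subgroup $\langle b_1,\dots,b_r\rangle$ contains $\langle a_1,\dots,a_r\rangle$. Then $\{b_1,\dots,b_r\}$ is simple in $K(b_1,\dots,b_r)$.
   Context: For a field $E$, a tuple $\{c_1,\dots,c_k\}\subseteq E^{\times}$ is simple in $E$ if it is multiplicatively independent ($c_1^{n_1}\cdots c_k^{n_k}=1$ with $n_i\in\mathbb{Z}$ only if all $n_i=0$) and the subgroup $\langle c_1,\dots,c_k\rangle$ is pure in $E^{\times}$ (whenever $x^n=c$, $c\in\langle c_1,\dots,c_k\rangle$, $n\ge1$, has a solution in $E^\times$, it has one in $\langle c_1,\dots,c_k\rangle$). *)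

(* Defs.v *)
From mathcomp Require Import all_boot all_algebra.
From mathcomp Require Import Rstruct.
From mathcomp.real_closed Require Import complex.

Set Implicit Arguments.
Unset Strict Implicit.
Unset Printing Implicit Defensive.
Import GRing.Theory.
Local Open Scope ring_scope.

Definition CC : numClosedFieldType := (Rdefinitions.R)[i].

Definition in_mgroup (F : fieldType) (r : nat) (c : 'I_r -> F) (x : F) : Prop :=
  exists n : 'I_r -> int, x = \prod_(i < r) (c i) ^ (n i).

Definition mult_indep (F : fieldType) (r : nat) (c : 'I_r -> F) : Prop :=
  forall n : 'I_r -> int, \prod_(i < r) (c i) ^ (n i) = 1 -> forall i, n i = 0.

Definition simple_in (F : fieldType) (E : F -> Prop) (r : nat) (c : 'I_r -> F) : Prop :=
  [/\ forall i, E (c i) /\ c i != 0,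
      mult_indep c &
      forall (x y : F) (n : nat), (0 < n)%N -> E y -> y != 0 ->
        y ^+ n = x -> in_mgroup c x ->
        exists2 z, in_mgroup c z & z ^+ n = x].

Definition is_subfield (F : fieldType) (S : F -> Prop) : Prop :=
  [/\ S 0, S 1,
      forall x y, S x -> S y -> S (x - y),
      forall x y, S x -> S y -> S (x * y) &
      forall x, S x -> S x^-1].

(* K(b_1..b_r) inside L, where K is embedded in L by j: the smallest subfield
   of L containing j(K) and the b_i *)
Definition adjoin (K L : fieldType) (j : {rmorphism K -> L}) (r : nat)
    (b : 'I_r -> L) (x : L) : Prop :=
  forall S : L -> Prop, is_subfield S -> (forall k, S (j k)) ->
    (forall i, S (b i)) -> S x.

(* Main.v *)
Require Import Defs.
From mathcomp Require Import all_boot all_algebra.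
From mathcomp Require Import Rstruct.
From mathcomp.real_closed Require Import complex.
From HB Require Import structures.
From mathcomp Require Import boolp ring.
Set Implicit Arguments. Unset Strict Implicit. Unset Printing Implicit Defensive.
Import GRing.Theory.
Local Open Scope ring_scope.

Section SF.
Variables (L : fieldType) (E : L -> Prop) (HE : is_subfield E).
Definition Ep : pred L := fun x => let _ := HE in `[< E x >].
Lemma EpP x : reflect (E x) (x \in Ep).
Proof. exact: (iffP (asboolP _)). Qed.
Lemma Ep_divring : divring_closed Ep.
Proof.
case: HE => H0 H1 HB HM HV; split.
- by apply/EpP.
- by move=> x y /EpP ? /EpP ?; apply/EpP; auto.
- move=> x y /EpP ? /EpP ?; apply/EpP; apply: HM => //; auto.
Qed.
HB.instance Definition _ := GRing.isDivringClosed.Build L Ep Ep_divring.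
Record sft := SFT { sfv : L; sfP : sfv \in Ep }.
HB.instance Definition _ := [isSub for sfv].
HB.instance Definition _ := [Choice of sft by <:].
HB.instance Definition _ := [SubChoice_isSubIntegralDomain of sft by <:].
HB.instance Definition _ := [SubIntegralDomain_isSubField of sft by <:].
End SF.

Lemma prod_const_seq (R : comNzRingType) (I : Type) (s : seq I) (x : R) :
  \prod_(i <- s) x = x ^+ size s.
Proof. by elim: s => [|a s IH]; rewrite ?big_nil ?expr0 // big_cons IH exprS. Qed.

Definition pure (L : fieldType) (E G : L -> Prop) :=
  forall (x y : L) (n : nat), (0 < n)%N -> E y -> y != 0 -> y ^+ n = x -> G x ->
    exists2 w, G w & w ^+ n = x.

Lemma subfieldX (L : fieldType) (E : L -> Prop) : is_subfield E ->
  forall x n, E x -> E (x ^+ n).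
Proof.
case=> E0 E1 EB EM EV x n Ex.
by elim: n => [|n IH]; [rewrite expr0 | rewrite exprS; apply: EM].
Qed.

Lemma pure_of_prime (L : fieldType) (E G : L -> Prop) :
  is_subfield E ->
  (forall n, (0 < n)%N -> exists2 w, E w & n.-primitive_root w) ->
  (forall p, prime p -> forall x y, E y -> y != 0 -> y ^+ p = x -> G x ->
     exists2 w, G w & w ^+ p = x) ->
  pure E G.
Proof.
move=> HE Hr Hp x y n; elim/ltn_ind: n x y => n IH x y n0 Ey y0 yx Gx.
have [n1|n1] := eqVneq n 1%N; first by exists x => //; rewrite n1 expr1.
have n1' : (1 < n)%N by rewrite ltn_neqAle eq_sym n1.
have pp := pdiv_prime n1'.
set p := pdiv n in pp.
have pn : (p %| n)%N := pdiv_dvd n.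
set m := (n %/ p)%N.
have nE : n = (m * p)%N by rewrite /m divnK.
have m0 : (0 < m)%N by rewrite /m divn_gt0 ?prime_gt0 // dvdn_leq.
have mn : (m < n)%N by rewrite /m ltn_Pdiv ?prime_gt1.
case: (HE) => E0 E1 EB EM EV.
have Eym : E (y ^+ m) by apply: subfieldX.
have ymp : (y ^+ m) ^+ p = x by rewrite -exprM -nE.
have [z1 Gz1 z1p] := Hp p pp x (y ^+ m) Eym (expf_neq0 _ y0) ymp Gx.
have x0 : x != 0 by rewrite -yx expf_neq0.
have z10 : z1 != 0 by apply: contraNneq x0 => z0; rewrite -z1p z0 expr0n eqn0Ngt prime_gt0.
have [eta Eeta Heta] := Hr n n0.
have Hrho : p.-primitive_root (eta ^+ m) := dvdn_prim_root Heta pn.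
have : (y ^+ m / z1) ^+ p = 1 by rewrite expr_div_n -exprM -nE yx z1p divff.
case/(prim_rootP Hrho) => i Hi.
have eta0 : eta ^+ i != 0 by rewrite expf_neq0 // (prim_root_eq0 Heta) -lt0n.
have yi : (y / eta ^+ i) ^+ m = z1.
  rewrite expr_div_n -exprM mulnC exprM -Hi; field.
  by rewrite z10 expf_neq0.
have [w Gw wm] := IH m mn z1 (y / eta ^+ i) m0
  (EM _ _ Ey (EV _ (subfieldX HE i Eeta))) (mulf_neq0 y0 (invr_neq0 eta0)) yi Gz1.
by exists w => //; rewrite nE exprM wm z1p.
Qed.

Definition Inv (L : fieldType) (Kj B A : L -> Prop) (G E : L -> Prop) :=
  [/\ is_subfield E, (forall x, Kj x -> E x), (forall x, G x -> E x /\ x != 0),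
      [/\ G 1, (forall x y, G x -> G y -> G (x * y)) & (forall x, G x -> G x^-1)] &
      [/\ (forall x, G x -> B x), pure E G & (forall x, E x -> A x)]].

Section Step.
Variables (L : fieldType) (E : L -> Prop) (HE : is_subfield E).
Local Notation F := (sft HE).
Local Notation EP := (Ep HE).
Variables (q : nat) (Hq : prime q) (z : L) (Hz : q.-primitive_root z) (HzE : E z).
Variables (be : L) (Hbe0 : be != 0) (ga : L) (Hga : be ^+ q = ga) (HgaE : E ga) (NbE : ~ E be).

Definition inF (x : L) (H : E x) : F := SFT (introT (EpP HE x) H).
Lemma val_inF x (H : E x) : val (inF H) = x. Proof. by []. Qed.
Lemma valE (x : F) : val x \in EP. Proof. exact: sfP. Qed.

Definition iv : {rmorphism F -> L} := (val : F -> L).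
Arguments iv : simpl never.
Lemma ivE (x : F) : iv x \in EP. Proof. exact: sfP. Qed.
Definition peval (f : {poly F}) : L := (map_poly iv f).[be].
Let gF : F := inF HgaE.
Definition mu : {poly F} := 'X^q - gF%:P.

Lemma q_gt0 : (0 < q)%N. Proof. exact: prime_gt0. Qed.

Lemma mapB f g : map_poly iv (f - g) = map_poly iv f - map_poly iv g.
Proof. exact: rmorphB. Qed.
Lemma mapD f g : map_poly iv (f + g) = map_poly iv f + map_poly iv g.
Proof. exact: rmorphD. Qed.
Lemma mapM f g : map_poly iv (f * g) = map_poly iv f * map_poly iv g.
Proof. exact: rmorphM. Qed.
Lemma mapXn f n : map_poly iv (f ^+ n) = map_poly iv f ^+ n.
Proof. exact: rmorphXn. Qed.
Lemma ivM (x y : F) : iv (x * y) = iv x * iv y. Proof. exact: rmorphM. Qed.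
Lemma ivB (x y : F) : iv (x - y) = iv x - iv y. Proof. exact: rmorphB. Qed.
Lemma ivXn (x : F) n : iv (x ^+ n) = iv x ^+ n. Proof. exact: rmorphXn. Qed.
Lemma iv0 : iv 0 = 0. Proof. exact: rmorph0. Qed.
Lemma coef_iv (p : {poly F}) i : (map_poly iv p)`_i = iv p`_i. Proof. exact: coef_map. Qed.
Lemma foo n : map_poly iv ('X^n) = 'X^n. Proof. exact: map_polyXn. Qed.
Lemma foo2 : map_poly iv 'X = 'X. Proof. exact: map_polyX. Qed.
Lemma map_mu : map_poly iv mu = 'X^q - ga%:P.
Proof. by rewrite /mu mapB map_polyXn map_polyC. Qed.

Lemma pevalM f g : peval (f * g) = peval f * peval g.
Proof. by rewrite /peval mapM hornerM. Qed.
Lemma pevalD f g : peval (f + g) = peval f + peval g.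
Proof. by rewrite /peval mapD hornerD. Qed.
Lemma pevalB f g : peval (f - g) = peval f - peval g.
Proof. by rewrite /peval mapB hornerD hornerN. Qed.
Lemma pevalC c : peval c%:P = val c.
Proof. by rewrite /peval map_polyC hornerC. Qed.
Lemma peval1 : peval 1 = 1.
Proof. by rewrite -polyC1 pevalC rmorph1. Qed.
Lemma pevalX : peval 'X = be.
Proof. by rewrite /peval map_polyX hornerX. Qed.
Lemma pevalXn n : peval 'X^n = be ^+ n.
Proof. by rewrite /peval map_polyXn hornerXn. Qed.
Lemma peval_mu : peval mu = 0.
Proof. by rewrite /peval map_mu hornerD hornerN hornerXn hornerC Hga subrr. Qed.

Lemma mu0 : mu != 0.
Proof. by rewrite -size_poly_eq0 /mu size_XnsubC ?q_gt0. Qed.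
Lemma size_mu : size mu = q.+1.
Proof. by rewrite /mu size_XnsubC ?q_gt0. Qed.

Lemma FX : 'X^q - ga%:P = \prod_(i <- iota 0 q) ('X - (z ^+ i * be)%:P).
Proof.
rewrite -(big_map (fun i => z ^+ i * be) predT (fun w => 'X - w%:P)).
rewrite [LHS](@all_roots_prod_XsubC _ _ [seq z ^+ i * be | i <- iota 0 q]).
- by rewrite (monicP (monicXnsubC _ q_gt0)) scale1r.
- by rewrite size_XnsubC ?q_gt0 // size_map size_iota.
- apply/allP => _ /mapP[i _ ->] /=; rewrite rootE !hornerE exprMn -exprM mulnC exprM.
  by rewrite (prim_expr_order Hz) expr1n mul1r Hga subrr.
- rewrite uniq_rootsE map_inj_in_uniq ?iota_uniq // => i k.
  rewrite !mem_iota !add0n => ltiq ltkq /(mulIf Hbe0) /eqP.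
  by rewrite (eq_prim_root_expr Hz) !modn_small // => /eqP.
Qed.

Lemma lemP u : be ^+ u \in EP -> (q %| u)%N.
Proof.
move=> Hu; apply/negPn/negP => nd.
have cop : coprime q u by rewrite prime_coprime.
have [a _] := Bezoutl u q_gt0.
rewrite (eqP cop) => /dvdnP [c Hc].
apply: NbE; apply/(EpP HE).
have Hb : be * be ^+ (a * u) = ga ^+ c by rewrite -exprS -addn1 addnC Hc -Hga -exprM mulnC.
have -> : be = ga ^+ c / (be ^+ u) ^+ a.
  by rewrite -Hb -exprM mulnC mulfK // expf_neq0.
by rewrite rpredM ?rpredV // rpredX //; apply/(EpP HE).
Qed.

Lemma lemD (h : {poly F}) : h %| mu -> (size h <= 1)%N \/ h %= mu.
Proof.
move=> hd.
have hd' : map_poly iv h %| \prod_(i <- iota 0 q) ('X - (z ^+ i * be)%:P).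
  by rewrite -FX -map_mu dvdp_map.
have [m Hm] := dvdp_prod_XsubC hd'.
set s := mask m (iota 0 q) in Hm.
have szh : size h = (size s).+1.
  by rewrite -(size_map_poly iv) (eqp_size Hm) size_prod_XsubC.
have [s0|sn0] := eqVneq (size s) 0%N; first by left; rewrite szh s0.
have [qs|sq] := leqP q (size s).
  right; rewrite -dvdp_size_eqp // size_mu szh eqSS eqn_leq qs andbT.
  by have := dvdp_leq mu0 hd; rewrite size_mu szh.
exfalso.
case/eqpP: Hm => -[c1 c2] /andP[c10' c20'] Heq0.
have Heq : c1 *: map_poly iv h = c2 *: \prod_(i <- s) ('X - (z ^+ i * be)%:P) := Heq0.
have c10 : c1 != 0 := c10'.
clear Heq0 c10' c20'.
set P := \prod_(i <- s) _ in Heq.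
have lc : c1 * iv (lead_coef h) = c2.
  have := congr1 lead_coef Heq.
  by rewrite !lead_coefZ lead_coef_map (monicP (monic_prod_XsubC _ _ _)) mulr1.
have h0' := congr1 (horner^~ (iv 0)) Heq.
rewrite !hornerZ horner_map rmorph0 in h0'.
have P0 : P.[0] = (\prod_(i <- s) (- z ^+ i)) * be ^+ (size s).
  rewrite /P horner_prod -prod_const_seq -big_split /=.
  by apply: eq_bigr => i _; rewrite hornerXsubC sub0r mulNr.
have pz0 : \prod_(i <- s) (- z ^+ i) != 0.
  rewrite prodf_seq_neq0; apply/allP => i _ /=.
  by rewrite oppr_eq0 expf_neq0 // (prim_root_eq0 Hz) -lt0n q_gt0.
have lh0 : iv (lead_coef h) != 0.
  by rewrite fmorph_eq0 lead_coef_eq0 -size_poly_eq0 szh.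
have Hbs : be ^+ size s = iv (h.[0]) / iv (lead_coef h) / \prod_(i <- s) (- z ^+ i).
  rewrite P0 -lc in h0'.
  have e : iv h.[0] = iv (lead_coef h) * ((\prod_(i <- s) (- z ^+ i)) * be ^+ size s).
    by apply: (mulfI c10); rewrite mulrA; exact: h0'.
  rewrite e; field; by rewrite lh0 pz0.
have : be ^+ size s \in EP.
  rewrite Hbs rpredM ?rpredV ?rpredM ?rpredV ?ivE //.
  by apply: rpred_prod => i _; rewrite rpredN rpredX //; apply/EpP.
move/lemP => /(dvdn_leq _) /= H.
by have := H; rewrite lt0n sn0 => /(_ isT); rewrite leqNgt sq.
Qed.

Lemma peval0 : peval 0 = 0.
Proof. by rewrite /peval map_poly0 horner0. Qed.

Lemma coprime_mu g : (size (gcdp g mu) <= 1)%N -> coprimep g mu.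
Proof.
move=> Hs; rewrite /coprimep eqn_leq Hs /= lt0n size_poly_eq0 gcdp_eq0 negb_and.
by rewrite mu0 orbT.
Qed.

Lemma lemM1 g : peval g = 0 -> mu %| g.
Proof.
move=> g0.
have [Hs|He] := lemD (dvdp_gcdr g mu); last by rewrite -(eqp_dvdl _ He) dvdp_gcdl.
exfalso.
case/Bezout_eq1_coprimepP: (coprime_mu Hs) => [[u v] /= Huv].
have := congr1 peval Huv.
rewrite pevalD !pevalM g0 peval_mu peval1 !mulr0 addr0 => /eqP.
by rewrite eq_sym oner_eq0.
Qed.

Lemma lemInv g : peval g != 0 -> exists h, peval h * peval g = 1.
Proof.
move=> g0.
have [Hs|He] := lemD (dvdp_gcdr g mu); last first.
  have : mu %| g by rewrite -(eqp_dvdl _ He) dvdp_gcdl.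
  by rewrite dvdp_eq => /eqP Hg; rewrite Hg pevalM peval_mu mulr0 eqxx in g0.
case/Bezout_eq1_coprimepP: (coprime_mu Hs) => [[u v] /= Huv].
exists u; have := congr1 peval Huv.
by rewrite pevalD !pevalM peval_mu peval1 mulr0 addr0.
Qed.

Definition Rp x := exists g, x = peval g.

Lemma R_subfield : is_subfield Rp.
Proof.
split.
- by exists 0; rewrite peval0.
- by exists 1; rewrite peval1.
- by move=> _ _ [f ->] [g ->]; exists (f - g); rewrite pevalB.
- by move=> _ _ [f ->] [g ->]; exists (f * g); rewrite pevalM.
- move=> _ [g ->]; have [g0|g0] := eqVneq (peval g) 0.
    by exists 0; rewrite g0 invr0 peval0.
  have [h Hh] := lemInv g0; exists h.
  by rewrite -[peval h]mulr1 -(divff g0) mulrA Hh mul1r.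
Qed.

Lemma R_E x : E x -> Rp x.
Proof. by move=> H; exists (inF H)%:P; rewrite pevalC. Qed.
Lemma R_be : Rp be.
Proof. by exists 'X; rewrite pevalX. Qed.

Lemma R_min (S : L -> Prop) : is_subfield S -> (forall x, E x -> S x) -> S be ->
  forall x, Rp x -> S x.
Proof.
case=> S0 S1 SB SM SV SE Sbe _ [g ->].
have SD x y : S x -> S y -> S (x + y).
  move=> Sx Sy; have -> : x + y = x - (0 - y) by rewrite sub0r opprK.
  by apply: (SB _ _ Sx); apply: (SB _ _ S0).
elim/poly_ind: g => [|g c IH]; first by rewrite peval0.
rewrite pevalD pevalM pevalX pevalC; apply: SD; first exact: SM.
by apply: SE; apply/(EpP HE); exact: ivE.
Qed.
Variables (G : L -> Prop) (HG_E : forall x, G x -> E x) (HG_0 : forall x, G x -> x != 0)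
  (HG_M : forall x y, G x -> G y -> G (x * y)) (HG_V : forall x, G x -> G x^-1)
  (HgaG : G ga) (HGpure : pure E G)
  (Hroots : forall n, (0 < n)%N -> exists2 w, E w & n.-primitive_root w).


Definition G' x := exists g n, G g /\ x = g * be ^+ n.

Lemma G1 : G 1.
Proof. by rewrite -(divff (HG_0 HgaG)); apply: HG_M => //; apply: HG_V. Qed.
Lemma GX x n : G x -> G (x ^+ n).
Proof. by move=> Gx; elim: n => [|n IH]; [rewrite expr0; exact: G1 | rewrite exprS; apply: HG_M]. Qed.

Lemma Einv x : E x -> x \in EP. Proof. by move/(EpP HE). Qed.
Lemma Eof x : x \in EP -> E x. Proof. by move/(EpP HE). Qed.

Lemma pevalXp f n : peval (f ^+ n) = peval f ^+ n.
Proof. elim: n => [|n IH]; first by rewrite !expr0 peval1. by rewrite !exprS pevalM IH. Qed.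

Lemma evz_mu h : mu %| h -> (map_poly iv h).[z * be] = 0.
Proof.
rewrite dvdp_eq => /eqP ->; rewrite mapM hornerM map_mu hornerD hornerN hornerXn hornerC.
by rewrite exprMn (prim_expr_order Hz) mul1r Hga subrr mulr0.
Qed.

Lemma pure_prime p : prime p -> forall x y, Rp y -> y != 0 -> y ^+ p = x -> G' x ->
  exists2 w, G' w & w ^+ p = x.
Proof.
move=> pp x _ [f ->] y0 yx [g [t [Gg xE]]].
have z0 : z != 0 by rewrite (prim_root_eq0 Hz) -lt0n q_gt0.
set f1 := f %% mu.
have pf1 : peval f1 = peval f.
  by rewrite [in RHS](divp_eq f mu) pevalD pevalM peval_mu mulr0 add0r.
rewrite -pf1 in y0 yx *.
have sf1 : (size f1 <= q)%N.
  by have := ltn_modpN0 f mu0; rewrite size_mu.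
have smf1 : (size (map_poly iv f1) <= q)%N by rewrite size_map_poly.
set Y := peval f1 in y0 yx *.
have YE : Y = \sum_(i < q) iv f1`_i * be ^+ i.
  by rewrite /Y /peval (horner_coef_wide _ smf1); apply: eq_bigr => i _; rewrite coef_iv.
set Yt := (map_poly iv f1).[z * be].
have YtE : Yt = \sum_(i < q) iv f1`_i * z ^+ i * be ^+ i.
  by rewrite /Yt (horner_coef_wide _ smf1); apply: eq_bigr => i _; rewrite coef_iv exprMn mulrA.
have GE := HG_E Gg.
have C1 : Yt ^+ p = z ^+ t * x.
  pose h := f1 ^+ p - (inF GE)%:P * 'X^t.
  have ph : peval h = 0 by rewrite pevalB pevalM pevalXp pevalC pevalXn yx xE val_inF subrr.
  have := evz_mu (lemM1 ph).
  rewrite /h mapB mapM !mapXn hornerD hornerN hornerM !horner_exp map_polyC map_polyX hornerC hornerX.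
  rewrite -/Yt => /eqP; rewrite subr_eq0 => /eqP ->.
  by rewrite xE exprMn mulrCA.
have [c Ec YtE2] : exists2 c, E c & Yt = c * Y.
  have pq0 : (0 < p * q)%N by rewrite muln_gt0 prime_gt0 // q_gt0.
  have [eta Eeta Heta] := Hroots pq0.
  have Hz' : q.-primitive_root (eta ^+ p).
    by have := dvdn_prim_root Heta (dvdn_mull p (dvdnn q)); rewrite mulnK // q_gt0.
  have Hrho : p.-primitive_root (eta ^+ q).
    by have := dvdn_prim_root Heta (dvdn_mulr q (dvdnn p)); rewrite mulKn // prime_gt0.
  have [k0 Hk0] := prim_rootP Hz' (prim_expr_order Hz).
  set om := eta ^+ (k0 * t).
  have om0 : om != 0 by rewrite expf_neq0 // (prim_root_eq0 Heta) -lt0n.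
  have omp : om ^+ p = z ^+ t by rewrite Hk0 -!exprM mulnC mulnA.
  have : (Yt / (om * Y)) ^+ p = 1.
    by rewrite expr_div_n exprMn omp yx C1 divff // -yx mulf_neq0 // expf_neq0.
  case/(prim_rootP Hrho) => i Hi.
  exists (om * (eta ^+ q) ^+ i).
    by apply: Eof; rewrite rpredM // ?rpredX // Einv.
  rewrite -Hi; field; by rewrite om0 y0.
have Hsum : \sum_(i < q) iv f1`_i * (z ^+ i - c) * be ^+ i = 0.
  have -> : \sum_(i < q) iv f1`_i * (z ^+ i - c) * be ^+ i = Yt - c * Y.
    rewrite YtE YE mulr_sumr -sumrB; apply: eq_bigr => i _; ring.
  by rewrite YtE2 subrr.
have Hcomp : forall i, (i < q)%N -> iv f1`_i * (z ^+ i - c) = 0.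
  pose w := \poly_(i < q) (f1`_i * ((inF HzE) ^+ i - inF Ec)).
  have szw : (size (map_poly iv w) <= q)%N by rewrite size_map_poly size_poly.
  have pw : peval w = 0.
    rewrite /peval (horner_coef_wide _ szw) -[RHS]Hsum; apply: eq_bigr => i _.
    by rewrite coef_iv coef_poly ltn_ord ivM ivB ivXn.
  have w0 : w = 0.
    apply/eqP; apply/negPn/negP => w0.
    have := dvdp_leq w0 (lemM1 pw); rewrite size_mu leqNgt ltnS.
    by rewrite (leq_trans (size_poly _ _)).
  move=> i ltiq; have := congr1 (fun p : {poly F} => iv p`_i) w0.
  by rewrite coef_poly ltiq coef0 iv0 ivM ivB ivXn.
have f10 : f1 != 0 by apply: contraNneq y0 => f0; rewrite /Y f0 peval0.
set k := (size f1).-1.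
have ltkq : (k < q)%N.
  by rewrite /k prednK ?lt0n ?size_poly_eq0 // (leq_trans _ sf1).
have lt0 : iv f1`_k != 0.
  by rewrite fmorph_eq0 -/(lead_coef f1) lead_coef_eq0.
have cE : c = z ^+ k.
  by have := Hcomp k ltkq => /eqP; rewrite mulf_eq0 (negPf lt0) /= subr_eq0 => /eqP.
have Hoth : forall i, (i < q)%N -> i != k -> iv f1`_i = 0.
  move=> i ltiq nik; have := Hcomp i ltiq => /eqP; rewrite mulf_eq0 cE subr_eq0.
  rewrite (eq_prim_root_expr Hz) !modn_small // (negPf nik) orbF => /eqP //.
have YE2 : Y = iv f1`_k * be ^+ k.
  rewrite YE (bigD1 (Ordinal ltkq)) //.
  rewrite big1; first exact: addr0.
  move=> i Hi; have nik : i != Ordinal ltkq := Hi; rewrite (Hoth i) ?mul0r //; apply: contraNneq nik => ik; exact: val_inj.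
set e := iv f1`_k.
have Ee : E e by apply: Eof; exact: ivE.
have g0 : g != 0 := HG_0 Gg.
have ga0 : ga != 0 := HG_0 HgaG.
have xE2 : x = e ^+ p * be ^+ (k * p) by rewrite -yx YE2 exprMn -exprM.
set u := (t + k * p * q - k * p)%N.
have uE : (u + k * p = t + k * p * q)%N.
  by rewrite /u subnK // (leq_trans (leq_pmulr _ q_gt0) (leq_addl _ _)).
have e1 : be ^+ (u + k * p) = be ^+ t * ga ^+ (k * p).
  by rewrite uE exprD [(k * p * q)%N]mulnC exprM Hga.
have Hbt : be ^+ t = e ^+ p * be ^+ (k * p) / g.
  by rewrite -xE2 xE mulrAC divff // mul1r.
have bkp0 : be ^+ (k * p) != 0 by rewrite expf_neq0.
have bu : be ^+ u = e ^+ p * ga ^+ (k * p) / g.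
  apply: (mulIf bkp0); rewrite -exprD e1 Hbt.
  move: (e ^+ p) (be ^+ (k * p)) (g^-1) (ga ^+ (k * p)) => a1 a2 a3 a4; ring.
have EPbu : be ^+ u \in EP.
  by rewrite bu rpredM ?rpredV ?rpredM ?rpredX // Einv.
have qu := lemP EPbu.
have bu2 : be ^+ u = ga ^+ (u %/ q) by rewrite -Hga -exprM mulnC divnK.
have gkp0 : ga ^+ (k * p) != 0 by rewrite expf_neq0.
have Gep : G (e ^+ p).
  have -> : e ^+ p = g * ga ^+ (u %/ q) / ga ^+ (k * p).
    rewrite -bu2 bu; move: (e ^+ p) (ga ^+ (k * p)) gkp0 => a9 c9 c90.
    by field; rewrite g0 c90.
  by apply: HG_M; [apply: HG_M => //; apply: GX | apply: HG_V; apply: GX].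
have [w Gw wp] := HGpure (prime_gt0 pp) Ee lt0 (erefl (e ^+ p)) Gep.
exists (w * be ^+ k); first by exists w, k; split.
by rewrite exprMn wp -exprM xE2.
Qed.
Variables (Kj B A : L -> Prop) (HKjE : forall x, Kj x -> E x) (HB1 : B 1)
  (HBM : forall x y, B x -> B y -> B (x * y)) (HbeB : B be) (HGB : forall x, G x -> B x)
  (HA : is_subfield A) (HEA : forall x, E x -> A x) (HbeA : A be).

Lemma step_main : Inv Kj B A G' Rp /\ (forall x, G x -> G' x) /\ G' be.
Proof.
have RS := R_subfield.
have Rroots : forall n, (0 < n)%N -> exists2 w, Rp w & n.-primitive_root w.
  by move=> n n0; have [w Ew Hw] := Hroots n0; exists w => //; apply: R_E.
split; last split.
- split => //.
  + by move=> x /HKjE; apply: R_E.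
  + move=> _ [g [n [Gg ->]]]; split.
      by exists ((inF (HG_E Gg))%:P * 'X^n); rewrite pevalM pevalC pevalXn.
    by apply: mulf_neq0; [exact: HG_0 | exact: expf_neq0].
  + split.
    * by exists 1, 0%N; split; [exact: G1 | rewrite expr0 mulr1].
    * move=> _ _ [g [n [Gg ->]]] [g' [n' [Gg' ->]]]; exists (g * g'), (n + n')%N.
      by split; [exact: HG_M | rewrite exprD; ring].
    * move=> _ [g [n [Gg ->]]]; exists (g^-1 / ga ^+ n), (n * q.-1)%N; split.
        by apply: HG_M; apply: HG_V => //; apply: GX.
      have H : be ^+ (n * q.-1) * be ^+ n = ga ^+ n.
        by rewrite -exprD -{2}(muln1 n) -mulnDr addn1 prednK ?q_gt0 // mulnC exprM Hga.
      rewrite -H; field.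
      by rewrite (HG_0 Gg) !expf_neq0.
  + split.
    * move=> _ [g [n [Gg ->]]]; apply: HBM; first exact: HGB.
      by elim: n => [|n IH]; [rewrite expr0 | rewrite exprS; apply: HBM].
    * apply: pure_of_prime => // p pp x y Ry y0 yx G'x.
      exact: (pure_prime pp Ry y0 yx G'x).
    * exact: R_min.
- by move=> x Gx; exists x, 0%N; rewrite expr0 mulr1.
- by exists 1, 1%N; split; [exact: G1 | rewrite expr1 mul1r].
Qed.
End Step.

Module MatPart.
Import Num.Theory.

Section Mat.
Variables (F : fieldType) (r : nat).

Lemma pwD (c : 'I_r -> F) (e f : 'I_r -> int) : (forall i, c i != 0) ->
  \prod_(i < r) c i ^ (e i + f i) = \prod_(i < r) c i ^ e i * \prod_(i < r) c i ^ f i.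
Proof. by move=> c0; rewrite -big_split; apply: eq_bigr => i _; rewrite expfzDr. Qed.

Lemma pwZ (c : 'I_r -> F) (e : 'I_r -> int) k :
  (\prod_(i < r) c i ^ e i) ^ k = \prod_(i < r) c i ^ (e i * k).
Proof.
rewrite (big_morph (fun x => x ^ k) (fun x y => expfzMl x y k) (exp1rz _ k)).
by apply: eq_bigr => i _; rewrite exprz_exp.
Qed.

Lemma pw_sum (c : F) (c0 : c != 0) (I : finType) (f : I -> int) :
  \prod_(i : I) c ^ f i = c ^ (\sum_(i : I) f i).
Proof.
by rewrite (big_morph (fun n => c ^ n) (fun m n => expfzDr m n c0) (expr0z c)).
Qed.

Lemma pw_comp (c : 'I_r -> F) (M : 'I_r -> 'I_r -> int) (e : 'I_r -> int) :
  (forall i, c i != 0) ->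
  \prod_(i < r) (\prod_(k < r) c k ^ M i k) ^ e i =
  \prod_(k < r) c k ^ (\sum_(i < r) e i * M i k).
Proof.
move=> c0; under eq_bigr => i _ do rewrite pwZ.
rewrite exchange_big /=; apply: eq_bigr => k _; rewrite pw_sum //.
by congr (_ ^ _); apply: eq_bigr => i _; rewrite mulrC.
Qed.
End Mat.

Lemma matrix_part (K L : fieldType) (j : {rmorphism K -> L}) r (a : 'I_r -> K) (b : 'I_r -> L) :
  (forall i, b i != 0) -> mult_indep a ->
  (forall x, in_mgroup a x -> in_mgroup b (j x)) ->
  mult_indep b /\ exists2 m, (0 < m)%N & forall i, exists2 y, in_mgroup a y & b i ^+ m = j y.
Proof.
move=> b0 Ha Hsub.
have HM : forall i, exists Mi : 'I_r -> int, j (a i) = \prod_(k < r) b k ^ Mi k.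
  move=> i; have [Mi ->] : in_mgroup b (j (a i)).
    apply: Hsub; exists (fun k => if k == i then 1 else 0).
    rewrite (bigD1 i) //= eqxx expr1z big1 ?mulr1 // => k /negPf ->; exact: expr0z.
  by exists Mi.
have [M HMi] := fin_all_exists HM.
pose Mx : 'M[int]_r := \matrix_(i, k) M i k.
pose rv (n : 'I_r -> int) : 'rV[int]_r := \row_k n k.
have key : forall e : 'I_r -> int,
    j (\prod_(i < r) a i ^ e i) = \prod_(k < r) b k ^ ((rv e *m Mx) 0 k).
  move=> e; rewrite rmorph_prod; under eq_bigr => i _ do rewrite fmorphXz HMi.
  rewrite pw_comp //; apply: eq_bigr => k _; congr (_ ^ _).
  by rewrite !mxE; apply: eq_bigr => i _; rewrite !mxE.
have indep0 : forall e : 'I_r -> int, j (\prod_(i < r) a i ^ e i) = 1 -> forall i, e i = 0.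
  move=> e /eqP; rewrite fmorph_eq1 => /eqP; exact: Ha.
set D := \det Mx.
have D0 : D != 0.
  apply/negP => /det0P [v v0 vM].
  have : forall i, v 0 i = 0.
    apply: indep0; rewrite key; apply: big1 => k _.
    have -> : rv (v 0) = v by apply/rowP => i; rewrite mxE.
    by rewrite vM mxE expr0z.
  move=> vz; case/negP: v0; apply/eqP/rowP => i; rewrite mxE.
  exact: vz.
have adjK : forall n : 'I_r -> int, rv n *m \adj Mx *m Mx = D *: rv n.
  by move=> n; rewrite -mulmxA mul_adj_mx mul_mx_scalar.
split.
  move=> n Hn.
  pose e := fun i => (rv n *m \adj Mx) 0 i.
  have re : rv e = rv n *m \adj Mx by apply/rowP => i; rewrite mxE.
  have : forall i, e i = 0.
    apply: indep0; rewrite key re adjK.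
    under eq_bigr => k _ do rewrite !mxE mulrC.
    by rewrite -pwZ Hn exp1rz.
  move=> ez.
  have : D *: rv n = 0.
    rewrite -adjK -re; apply/rowP => k; rewrite !mxE; apply: big1 => i _.
    by rewrite mxE ez mul0r.
  move/rowP => Hk i; have := Hk i; rewrite !mxE => /eqP; rewrite mulf_eq0 (negPf D0) /=.
  by move/eqP.
set m := `|(D * D)%R|%N.
have mE : m%:Z = D * D by rewrite /m gez0_abs // -expr2 sqr_ge0.
exists m; first by rewrite /m absz_gt0 mulf_neq0.
move=> i.
pose d := fun k : 'I_r => if k == i then 1 else 0 : int.
pose e := fun k => (rv d *m \adj Mx) 0 k.
have re : rv e = rv d *m \adj Mx by apply/rowP => k; rewrite mxE.
have biD : b i ^ D = j (\prod_(k < r) a k ^ e k).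
  rewrite key re adjK (bigD1 i) //= big1 ?mulr1.
    by rewrite !mxE /d eqxx mulr1.
  by move=> k /negPf ki; rewrite !mxE /d ki mulr0 expr0z.
exists ((\prod_(k < r) a k ^ e k) ^ D).
  by exists (fun k => e k * D); rewrite pwZ.
by rewrite fmorphXz -biD exprz_exp -mE.
Qed.

End MatPart.
Import MatPart.

Section Drive.
Variables (L : fieldType) (Kj B A : L -> Prop)
  (Kr : forall n, (0 < n)%N -> exists2 w, Kj w & n.-primitive_root w)
  (B1 : B 1) (BM : forall x y, B x -> B y -> B (x * y)) (BV : forall x, B x -> B x^-1)
  (Btf : forall x n, B x -> (0 < n)%N -> x ^+ n = 1 -> x = 1)
  (HA : is_subfield A) (HBA : forall x, B x -> A x).

Lemma BX x n : B x -> B (x ^+ n).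
Proof. by move=> Bx; elim: n => [|n IH]; [rewrite expr0 | rewrite exprS; apply: BM]. Qed.

Lemma inv_step G E q be : Inv Kj B A G E -> prime q -> B be -> G (be ^+ q) ->
  exists G2 E2, [/\ Inv Kj B A G2 E2, (forall x, G x -> G2 x) & G2 be].
Proof.
move=> Hinv Hq Bbe Gq.
have [Gbe|Gbe] := pselect (G be); first by exists G, E; split.
case: (Hinv) => HE HKE HGE [G1 GM GV] [HGB Hpure HEA].
have be0 : be != 0.
  by apply: contraNneq (HGE _ Gq).2 => ->; rewrite expr0n eqn0Ngt prime_gt0.
have NbE : ~ E be.
  move=> Ebe.
  have [w Gw wq] := Hpure (be ^+ q) be q (prime_gt0 Hq) Ebe be0 (erefl _) Gq.
  have w0 : w != 0 := (HGE _ Gw).2.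
  have : be / w = 1.
    apply: (Btf _ (prime_gt0 Hq)); first by apply: BM => //; apply: BV; apply: HGB.
    by rewrite expr_div_n wq divff // expf_neq0.
  by move=> H; apply: Gbe; rewrite -[be](divfK w0) H mul1r.
have [z Kz Hz] := Kr (prime_gt0 Hq).
have Hroots : forall n, (0 < n)%N -> exists2 w, E w & n.-primitive_root w.
  by move=> n n0; have [w Kw Hw] := Kr n0; exists w => //; apply: HKE.
have [H1 [H2 H3]] := step_main HE Hq Hz (HKE _ Kz) be0 (erefl (be ^+ q)) (HGE _ Gq).1 NbE
   (fun x Gx => (HGE x Gx).1) (fun x Gx => (HGE x Gx).2) GM GV Gq Hpure Hroots HKE B1 BM Bbe
   HGB HA HEA (HBA Bbe).
by exists (G' be G), (Rp HE be).
Qed.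

Lemma inv_iter n : (0 < n)%N -> forall G E be, Inv Kj B A G E -> B be -> G (be ^+ n) ->
  exists G2 E2, [/\ Inv Kj B A G2 E2, (forall x, G x -> G2 x) & G2 be].
Proof.
elim/ltn_ind: n => n IH n0 G E be Hinv Bbe Gn.
have [n1|n1] := eqVneq n 1%N; first by exists G, E; split => //; rewrite -(expr1 be) -n1.
have n1' : (1 < n)%N by rewrite ltn_neqAle eq_sym n1.
have pp := pdiv_prime n1'.
set p := pdiv n in pp.
have pn : (p %| n)%N := pdiv_dvd n.
set m := (n %/ p)%N.
have nE : n = (m * p)%N by rewrite /m divnK.
have m0 : (0 < m)%N by rewrite /m divn_gt0 ?prime_gt0 // dvdn_leq.
have mn : (m < n)%N by rewrite /m ltn_Pdiv ?prime_gt1.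
have Gm : G ((be ^+ m) ^+ p) by rewrite -exprM -nE.
have [G1 [E1 [Hinv1 GG1 G1b]]] := inv_step Hinv pp (BX m Bbe) Gm.
have [G2 [E2 [Hinv2 GG2 G2b]]] := IH m mn m0 G1 E1 be Hinv1 Bbe G1b.
by exists G2, E2; split => // x /GG1 /GG2.
Qed.

Lemma inv_all r (b : 'I_r -> L) (Hb : forall i, B (b i)) m (m0 : (0 < m)%N) G0 E0
  (Hinv0 : Inv Kj B A G0 E0) (Hm : forall i, G0 (b i ^+ m)) :
  forall k, (k <= r)%N -> exists G E, [/\ Inv Kj B A G E, (forall x, G0 x -> G x) &
     forall i : 'I_r, (i < k)%N -> G (b i)].
Proof.
elim=> [|k IH] kr; first by exists G0, E0; split.
have [G [E [Hinv GG Gb]]] := IH (ltnW kr).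
have [G2 [E2 [Hinv2 GG2 G2b]]] := inv_iter m0 Hinv (Hb (Ordinal kr)) (GG _ (Hm _)).
exists G2, E2; split => // [x /GG /GG2 //|i]; rewrite ltnS leq_eqVlt => /orP [/eqP ik|ik].
  by have -> : i = Ordinal kr by apply: val_inj.
by apply: GG2; apply: Gb.
Qed.
End Drive.

Lemma grp_pw (F : fieldType) (P : F -> Prop) r (c : 'I_r -> F) (e : 'I_r -> int) :
  P 1 -> (forall x y, P x -> P y -> P (x * y)) -> (forall x, P x -> P x^-1) ->
  (forall i, P (c i)) -> P (\prod_(i < r) c i ^ e i).
Proof.
move=> P1 PM PV Pc; apply: (big_ind P) => // i _.
have PX : forall x n, P x -> P (x ^+ n).
  by move=> x n Px; elim: n => [|n IH]; [rewrite expr0 | rewrite exprS; apply: PM].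
by case: (e i) => n; [apply: PX | apply: PV; apply: PX].
Qed.

Lemma sub_grp (F : fieldType) (S : F -> Prop) : is_subfield S ->
  [/\ S 1, (forall x y, S x -> S y -> S (x * y)) & (forall x, S x -> S x^-1)].
Proof. by case. Qed.

Theorem lemma2p16 (K : fieldType) (iota : {rmorphism K -> CC})
    (Hroots : forall n : nat, (0 < n)%N -> exists z : K, n.-primitive_root z)
    (L : fieldType) (j : {rmorphism K -> L})
    (r : nat) (a : 'I_r -> K) (b : 'I_r -> L)
    (Ha : simple_in (fun _ : K => True) a)
    (Hb0 : forall i, b i != 0)
    (Hsub : forall x : K, in_mgroup a x -> in_mgroup b (j x)) :
  simple_in (adjoin j b) b.
Proof.
have [Ha0 HaI Hapure] := Ha.
have a0 : forall i, a i != 0 := fun i => (Ha0 i).2.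
have [Hbind [m m0 Hm]] := matrix_part Hb0 HaI Hsub.
pose Kj := fun x : L => exists k, x = j k.
pose B := in_mgroup b.
pose A := adjoin j b.
pose G0 := fun x : L => exists2 y, in_mgroup a y & x = j y.
have HA : is_subfield A.
  split.
  - by move=> S [S0 _ _ _ _] _ _.
  - by move=> S [_ S1 _ _ _] _ _.
  - move=> x y Ax Ay S HS HK Hb; case: (HS) => _ _ SB _ _.
    by apply: SB; [exact: Ax | exact: Ay].
  - move=> x y Ax Ay S HS HK Hb; case: (HS) => _ _ _ SM _.
    by apply: SM; [exact: Ax | exact: Ay].
  - move=> x Ax S HS HK Hb; case: (HS) => _ _ _ _ SV.
    by apply: SV; exact: Ax.
have Ab : forall i, A (b i) by move=> i S _ _ Sb; exact: Sb i.
have AK : forall k, A (j k) by move=> k S _ SK _; exact: SK.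
have B1 : B 1 by exists (fun _ => 0); rewrite big1 // => i _; rewrite expr0z.
have BM : forall x y, B x -> B y -> B (x * y).
  by move=> _ _ [e ->] [f ->]; exists (fun i => e i + f i); rewrite pwD.
have BV : forall x, B x -> B x^-1.
  by move=> _ [e ->]; exists (fun i => e i * -1); rewrite -pwZ exprN1.
have Btf : forall x n, B x -> (0 < n)%N -> x ^+ n = 1 -> x = 1.
  move=> _ n [e ->] n0; rewrite -[_ ^+ n]/(_ ^ (n%:Z)) pwZ => /Hbind Hz.
  have ez : forall i, e i = 0.
    move=> i; have := Hz i => /eqP; rewrite mulf_eq0 => /orP [/eqP //| /eqP nz].
    by move: n0; case: nz => ->.
  by rewrite big1 // => i _; rewrite ez expr0z.
have [A1 AM AV] := sub_grp HA.
have HBA : forall x, B x -> A x by move=> _ [e ->]; apply: grp_pw.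
have Kr : forall n, (0 < n)%N -> exists2 w, Kj w & n.-primitive_root w.
  move=> n n0; have [z Hz] := Hroots n n0; exists (j z); first by exists z.
  by rewrite fmorph_primitive_root.
have aM : forall x y, in_mgroup a x -> in_mgroup a y -> in_mgroup a (x * y).
  by move=> _ _ [e ->] [f ->]; exists (fun i => e i + f i); rewrite pwD.
have aV : forall x, in_mgroup a x -> in_mgroup a x^-1.
  by move=> _ [e ->]; exists (fun i => e i * -1); rewrite -pwZ exprN1.
have a1 : in_mgroup a 1 by exists (fun _ => 0); rewrite big1 // => i _; rewrite expr0z.
have Hinv0 : Inv Kj B A G0 Kj.
  split.
  - split.
    + by exists 0; rewrite rmorph0.
    + by exists 1; rewrite rmorph1.
    + by move=> _ _ [x ->] [y ->]; exists (x - y); rewrite rmorphB.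
    + by move=> _ _ [x ->] [y ->]; exists (x * y); rewrite rmorphM.
    + by move=> _ [x ->]; exists x^-1; rewrite fmorphV.
  - by [].
  - move=> _ [y [e ->] ->]; split; first by eexists.
    rewrite fmorph_eq0; apply/prodf_neq0 => i _; exact: expfz_neq0.
  - split.
    + by exists 1 => //; rewrite rmorph1.
    + by move=> _ _ [x Hx ->] [y Hy ->]; exists (x * y); [exact: aM | rewrite rmorphM].
    + by move=> _ [x Hx ->]; exists x^-1; [exact: aV | rewrite fmorphV].
  - split.
    + by move=> _ [y Hy ->]; exact: Hsub.
    + move=> x _ n n0 [k ->] y0 yx [y' Hy' xE].
      have kn : k ^+ n = y' by apply: (fmorph_inj j); rewrite rmorphXn yx xE.
      have k0 : k != 0 by rewrite -(fmorph_eq0 j).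
      have [z Hz zn] := Hapure y' k n n0 I k0 kn Hy'.
      by exists (j z); [exists z | rewrite -rmorphXn zn].
    + by move=> _ [k ->].
have Hb : forall i, B (b i).
  move=> i; exists (fun k => if k == i then 1 else 0).
  rewrite (bigD1 i) //= eqxx expr1z big1 ?mulr1 // => k /negPf ->; exact: expr0z.
have Hm' : forall i, G0 (b i ^+ m).
  by move=> i; have [y Hy ->] := Hm i; exists y.
have [G [E [Hinv HG0 Gb]]] := inv_all Kr B1 BM BV Btf HA HBA Hb m0 Hinv0 Hm' (leqnn r).
case: Hinv => HE HKE HGE [G1 GM GV] [HGB Hpure HEA].
split.
- by move=> i; split; [exact: Ab | exact: Hb0].
- exact: Hbind.
- move=> x y n n0 Ay y0 yx [e xe].
  have Ey : E y.
    apply: Ay => // [k|i]; first by apply: HKE; exists k.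
    exact: (HGE _ (Gb i (ltn_ord i))).1.
  have Gx : G x by rewrite xe; apply: grp_pw => // i; exact: Gb.
  have [w Gw wn] := Hpure x y n n0 Ey y0 yx Gx.
  by exists w => //; apply: HGB.
Qed.
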